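(* Let $m\ge1$, $n\ge1$, fix $t_0\in\mathbb{Z}^m$ and let $\mathcal{Z}=\{t\in\mathbb{Z}^m\mid t\ge t_0\}$. Let $T=(T_1,\dots,T_m)\in\mathbb{N}^m$, $T\ne0$. Let $A_\alpha\colon\mathcal{Z}\to\mathcal{M}_n(\mathbb{C})$, $\alpha\in\{1,\dots,m\}$, satisfy $$A_\alpha(t+1_\beta)A_\beta(t)=A_\beta(t+1_\alpha)A_\alpha(t),\quad \forall t\in\mathcal{Z},\ \forall\alpha,\beta,$$ and suppose that for all $\alpha,\beta$ and all $t\in\mathcal{Z}$, $A_\alpha(t+T_\beta\cdot1_\beta)=A_\alpha(t)$ and $A_\alpha(t)$ is invertible. Let $\Phi(t)=\chi(t,t_0)$, $t\in\mathcal{Z}$. Assume one of: (i) $n=2$; or (ii) for all $\alpha$ and all $t\in\mathcal{Z}$ the matrix $A_\alpha(t)$ is Hermitian, and $A_\alpha(t)A_\alpha(t+k\cdot1_\alpha)=A_\alpha(t+k\cdot1_\alpha)A_\alpha(t)$ for all $t\in\mathcal{Z}$, $k\in\mathbb{N}$, $\alpha\in\{1,\dots,m\}$. Then there exist a function $P\colon\mathcal{Z}\to\mathcal{M}_n(\mathbb{C})$ and constant invertible matrices $B_1,\dots,B_m\in\mathcal{M}_n(\mathbb{C})$ such that (a) $P(t+T_\alpha\cdot1_\alpha)=P(t)$ for all $t\in\mathcal{Z}$ and all $\alpha$; (b) $B_\alpha B_\beta=B_\beta B_\alpha$ for all $\alpha,\beta$; (c) $\Phi(t)=P(t)B_1^{t^1}B_2^{t^2}\cdots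 B_m^{t^m}$ for all $t\ge t_0$.
   Context: $\mathbb{N}=\{0,1,2,\dots\}$; $1_\alpha\in\mathbb{Z}^m$ has $1$ in position $\alpha$ and $0$ elsewhere; $s\le t$ in $\mathbb{Z}^m$ means $s^\alpha\le t^\alpha$ for all $\alpha$; $t=(t^1,\dots,t^m)$. Under the compatibility relations, for each $s\in\mathcal{Z}$ there is a unique $\chi(\cdot,s)\colon\{t\in\mathcal{Z}\mid t\ge s\}\to\mathcal{M}_n(\mathbb{C})$ with $\chi(s,s)=I_n$ and $\chi(t+1_\alpha,s)=A_\alpha(t)\chi(t,s)$ for all $t\ge s$ and all $\alpha$ (the transition matrix). Negative integer powers of invertible matrices are powers of the inverse. *)

(* Defs.v *)
From HB Require Import structures.
From mathcomp Require Import all_boot all_order all_algebra.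
From mathcomp Require Import complex.
From mathcomp Require Import Rstruct.
Set Implicit Arguments. Unset Strict Implicit. Unset Printing Implicit Defensive.
Import Order.TTheory GRing.Theory Num.Theory.
Local Open Scope ring_scope.

Definition C : Type := complex Rdefinitions.R.

Definition zvec (m : nat) := 'I_m -> int.

Definition zle m (s t : zvec m) : Prop := forall i, s i <= t i.

Definition zadd m (t s : zvec m) : zvec m := fun i => t i + s i.

Definition zunit m (k : int) (a : 'I_m) : zvec m :=
  fun i => if i == a then k else 0.

Definition mxpowz n (B : 'M[C]_n) (z : int) : 'M[C]_n :=
  match z with
  | Posz k => B ^+ k
  | Negz k => (invmx B) ^+ k.+1
  end.

Definition hermitian_mx n (A : 'M[C]_n) : Prop :=
  forall i j, A i j = (A j i)^*.

(* Main.v *)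
Set Warnings "-all".
Require Import Defs.
From mathcomp Require Import all_boot all_order all_algebra complex Rstruct.
From mathcomp Require Import ring.
From Stdlib Require Import FunctionalExtensionality.
Import Order.TTheory GRing.Theory Num.Theory.
Local Open Scope ring_scope.
From mathcomp Require Import ring.
Lemma binom_sq (R : comNzRingType) (q d : R) (k : nat) :
  exists w, (q + d) ^+ k.+1 = q ^+ k.+1 + k.+1%:R * q ^+ k * d + d ^+ 2 * w.
Proof.
elim: k => [|k [w IH]]; first by exists 0; rewrite !expr0 expr1 mulr1 mul1r mulr0 addr0.
exists (q * w + k.+1%:R * q ^+ k + d * w).
rewrite exprS IH (mulrS 1 k.+1) !exprS; ring.
Qed.

Lemma poly_root (F : numClosedFieldType) (k : nat) (s : seq F) :
  all (fun x => x != 0) s ->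
  exists q : {poly F}, \prod_(x <- s) ('X - x%:P) %| q ^+ k.+1 - 'X.
Proof.
elim: s => [|mu s IH] /=; first by exists 0; rewrite big_nil dvd1p.
case/andP => mu0 /IH [q /dvdpP [r Hr]].
set p := \prod_(x <- s) ('X - x%:P).
suff [c Hc] : exists c : F, (p.[mu] = 0 /\ (r + k.+1%:R * q ^+ k * c%:P).[mu] = 0) \/ ((q + c%:P * p).[mu] ^+ k.+1 = mu /\ p.[mu] != 0).
  have [w Hw] := binom_sq _ q (c%:P * p) k.
  pose g := r + k.+1%:R * q ^+ k * c%:P + c%:P ^+ 2 * p * w.
  have Eg : (q + c%:P * p) ^+ k.+1 - 'X = g * p.
    rewrite Hw /g; have -> : q ^+ k.+1 = r * p + 'X by rewrite -Hr subrK.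
    ring.
  exists (q + c%:P * p); rewrite big_cons Eg -/p dvdp_mul // dvdp_XsubCl /root.
  case: Hc => [[pmu Hc]|[Hq pmu]].
    by rewrite /g hornerD Hc add0r !hornerE pmu mulr0 mul0r.
  have := congr1 (fun f => f.[mu]) Eg; rewrite hornerD hornerN hornerX horner_exp Hq subrr => /esym/eqP.
  by rewrite hornerM mulf_eq0 (negbTE pmu) orbF.
have [pmu|pmu] := eqVneq p.[mu] 0.
  have Hq : q.[mu] ^+ k.+1 = mu.
    have := congr1 (fun f => f.[mu]) Hr.
    rewrite hornerD hornerN hornerX horner_exp hornerM -/p pmu mulr0.
    by move/eqP; rewrite subr_eq0 => /eqP.
  have Kq : k.+1%:R * q.[mu] ^+ k != 0.
    rewrite mulf_eq0 pnatr_eq0 /= expf_eq0 negb_and; apply/orP; right.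
    apply: contra mu0 => /eqP q0; by rewrite -Hq q0 expr0n.
  exists (- r.[mu] / (k.+1%:R * q.[mu] ^+ k)); left; split => //.
  rewrite hornerD !hornerM hornerC horner_exp hornerMn hornerC; field.
  by move: Kq; rewrite mulf_eq0 negb_or -natr1 addrC andbC.
exists ((k.+1.-root mu - q.[mu]) / p.[mu]); right; split => //.
rewrite hornerD hornerCM -mulrA mulVf // mulr1 addrC subrK.
by rewrite Num.Theory.rootCK.
Qed.

Lemma mx_root (n : nat) (M : 'M[C]_n.+1) (k : nat) :
  M \in unitmx -> exists q : {poly C}, (horner_mx M q) ^+ k.+1 = M.
Proof.
move=> uM.
have [s Hs] := closed_field_poly_normal (char_poly M).
rewrite (monicP (char_poly_monic M)) scale1r in Hs.
have s0 : all (fun x => x != 0) s.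
  apply/allP => x xs; apply/negP => /eqP x0.
  have : eigenvalue M x by rewrite eigenvalue_root_char Hs root_prod_XsubC.
  case/eigenvalueP => v; rewrite x0 scale0r => Hv; apply/negP; rewrite negbK.
  by rewrite -[v](mulmxK uM) Hv mul0mx.
have [q /dvdpP [r Hr]] := poly_root _ k _ s0.
exists q; apply/eqP; rewrite -subr_eq0 -rmorphXn -[X in _ - X]horner_mx_X -rmorphB /=.
by rewrite Hr -Hs rmorphM /= Cayley_Hamilton mulr0.
Qed.
Lemma zsum_unit m (b : 'I_m) (k : int) : \sum_i zunit k b i = k.
Proof.
rewrite (bigD1 b) //= big1 ?addr0; first by rewrite /zunit eqxx.
by move=> i /negbTE ib; rewrite /zunit ib.
Qed.

Lemma zind m (t0 : zvec m) (P : zvec m -> Prop) :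
  P t0 -> (forall t b, zle t0 t -> P t -> P (zadd t (zunit 1 b))) ->
  forall t, zle t0 t -> P t.
Proof.
move=> H0 HS.
suff H : forall N t, zle t0 t -> \sum_i (t i - t0 i) = N%:Z -> P t.
  move=> t le; apply: (H _ t le (esym (gez0_abs _))).
  by rewrite sumr_ge0 // => i _; rewrite subr_ge0; exact: le.
elim=> [|N IH] t le Hs.
  have -> : t = t0 => //; apply: functional_extensionality => i.
  apply/eqP; rewrite -subr_eq0; apply/eqP.
  by apply: (psumr_eq0P _ Hs) => // j _; rewrite subr_ge0; exact: le.
have [b Hb|H0'] := pickP (fun b => t b != t0 b); last first.
  move: Hs; rewrite big1 // => i _.
  by move: (H0' i) => /= /negbFE/eqP ->; rewrite subrr.
have ltb : t0 b < t b by rewrite lt_neqAle eq_sym Hb le.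
pose t' := zadd t (zunit (-1) b).
have le' : zle t0 t'.
  move=> i; rewrite /t' /zadd /zunit; case: eqP => [->|_]; last by rewrite addr0.
  by rewrite -ltzD1 subrK.
have -> : t = zadd t' (zunit 1 b).
  apply: functional_extensionality => i; rewrite /t' /zadd /zunit.
  by case: eqP => _; [rewrite subrK | rewrite !addr0].
apply: HS => //; apply: IH => //.
have -> : \sum_i (t' i - t0 i) = \sum_i (t i - t0 i) + \sum_i zunit (-1) b i.
  rewrite -big_split /=; apply: eq_bigr => i _; rewrite /t' /zadd; ring.
by rewrite Hs zsum_unit -addn1 PoszD addrK.
Qed.

Lemma prod_shift (R : pzRingType) (I : eqType) (s : seq I) (F : I -> R) (c : R) (a : I) :
  (forall i, GRing.comm c (F i)) ->
  \prod_(i <- s) (F i * (if i == a then c else 1)) = (\prod_(i <- s) F i) * c ^+ (count_mem a s).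
Proof.
move=> Hc; elim: s => [|x s IH]; first by rewrite !big_nil mul1r.
rewrite !big_cons IH /= exprD -!mulrA; congr (_ * _).
have Hcp : GRing.comm (c ^+ (x == a)) (\prod_(i <- s) F i).
  apply/commr_sym/commrX/commr_sym; exact: commr_prod.
have -> : (if x == a then c else 1) = c ^+ (x == a) by case: (x == a); rewrite ?expr1 ?expr0.
by rewrite mulrA Hcp -mulrA.
Qed.

Lemma mxpowzE n (B : 'M[C]_n.+1) z : mxpowz B z = B ^ z.
Proof. by case: z => k //=; rewrite exprVn. Qed.

Theorem theorem2p11 (m n : nat) (t0 : zvec m) (T : 'I_m -> nat)
    (A : 'I_m -> zvec m -> 'M[C]_n) (Phi : zvec m -> 'M[C]_n) :
  (0 < m)%N -> (0 < n)%N ->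
  (exists b, T b != 0%N) ->
  (* compatibility relations on Z = {t >= t0} *)
  (forall t, zle t0 t -> forall a b : 'I_m,
     A a (zadd t (zunit 1 b)) *m A b t = A b (zadd t (zunit 1 a)) *m A a t) ->
  (* periodicity *)
  (forall t, zle t0 t -> forall a b : 'I_m,
     A a (zadd t (zunit (T b)%:Z b)) = A a t) ->
  (* invertibility *)
  (forall t, zle t0 t -> forall a, A a t \in unitmx) ->
  (* Phi = chi(., t0): Phi(t0) = I, Phi(t + 1_a) = A_a(t) Phi(t) for t >= t0 *)
  Phi t0 = 1%:M ->
  (forall t, zle t0 t -> forall a,
     Phi (zadd t (zunit 1 a)) = A a t *m Phi t) ->
  (* (i) or (ii) *)
  (n = 2%N \/
   ((forall (a : 'I_m) (t : zvec m), zle t0 t -> hermitian_mx (A a t)) /\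
    (forall (a : 'I_m) (t : zvec m) (k : nat), zle t0 t ->
       A a t *m A a (zadd t (zunit k%:Z a)) = A a (zadd t (zunit k%:Z a)) *m A a t))) ->
  exists (P : zvec m -> 'M[C]_n) (B : 'I_m -> 'M[C]_n),
    (forall a, B a \in unitmx) /\
    (forall t, zle t0 t -> forall a, P (zadd t (zunit (T a)%:Z a)) = P t) /\
    (forall a b, B a *m B b = B b *m B a) /\
    (forall t, zle t0 t -> Phi t = P t *m \prod_(a < m) mxpowz (B a) (t a)).
Proof.
move=> _ n0 _ _ Aper Aunit Phi0 PhiS _.
case: n n0 A Phi Aper Aunit Phi0 PhiS => [//|n] _ A Phi Aper Aunit Phi0 PhiS.
have zle_add : forall t (k : int) b, 0 <= k -> zle t0 t -> zle t0 (zadd t (zunit k b)).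
  move=> t k b k0 le i; rewrite /zadd /zunit; case: eqP => _; last by rewrite addr0.
  by rewrite (le_trans (le i)) // lerDl.
have zle0 : zle t0 t0 by move=> i.
have zaddC : forall t x y : zvec m, zadd (zadd t x) y = zadd (zadd t y) x.
  by move=> t x y; apply: functional_extensionality => i; rewrite /zadd addrAC.
pose M a := Phi (zadd t0 (zunit (T a)%:Z a)).
have Floq : forall a t, zle t0 t -> Phi (zadd t (zunit (T a)%:Z a)) = Phi t *m M a.
  move=> a; apply: zind; first by rewrite Phi0 mul1mx.
  move=> t b le IH.
  rewrite zaddC (PhiS _ (zle_add t (T a)%:Z a isT le)) Aper // IH PhiS //.
  by rewrite mulmxA.
have Punit : forall t, zle t0 t -> Phi t \in unitmx.
  apply: zind; first by rewrite Phi0 unitmx1.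
  by move=> t b le IH; rewrite PhiS // unitmx_mul Aunit.
have Mle : forall a, zle t0 (zadd t0 (zunit (T a)%:Z a)) by move=> a; apply: zle_add.
have Mcomm : forall a b, M a * M b = M b * M a.
  move=> a b; rewrite -!mulmxE -(Floq b _ (Mle a)) -(Floq a _ (Mle b)).
  by rewrite zaddC.
have Hq : forall a, exists q : {poly C},
    (horner_mx (M a) q) ^+ T a = M a /\ horner_mx (M a) q \is a GRing.unit.
  move=> a; have Mu := Punit _ (Mle a); rewrite -/(M a) in Mu.
  case HT: (T a) => [|k].
    exists 1; rewrite rmorph1 expr0 unitr1; split => //.
    rewrite /M HT; have -> : zadd t0 (zunit 0%N%:Z a) = t0 => //.
    by apply: functional_extensionality => i; rewrite /zadd /zunit; case: eqP; rewrite addr0.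
  have [q Hq] := mx_root _ _ k Mu.
  by exists q; split => //; rewrite -(unitrX_pos _ (ltn0Sn k)) Hq.
have [qf Hqf] := fin_all_exists Hq.
pose B a := horner_mx (M a) (qf a).
have BT : forall a, B a ^+ T a = M a by move=> a; case: (Hqf a).
have Bunit : forall a, B a \is a GRing.unit by move=> a; case: (Hqf a).
have Bcomm : forall a b, GRing.comm (B a) (B b).
  move=> a b; rewrite /GRing.comm -!mulmxE.
  apply: comm_horner_mx; apply: comm_mx_horner; rewrite /comm_mx !mulmxE; exact: Mcomm.
pose Q t := \prod_(a < m) mxpowz (B a) (t a).
have Qunit : forall t, Q t \is a GRing.unit.
  move=> t; rewrite /Q; apply: (big_ind (fun X => X \is a GRing.unit)).
  - exact: unitr1.
  - move=> x y xu yu; have := unitmx_mul x y; rewrite mulmxE => ->; exact/andP.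
  - by move=> i _; rewrite mxpowzE unitrXz.
have Qshift : forall t a, Q (zadd t (zunit (T a)%:Z a)) = Q t * M a.
  move=> t a; rewrite /Q.
  transitivity (\prod_(i < m) (mxpowz (B i) (t i) * (if i == a then M a else 1))).
    apply: eq_bigr => i _; rewrite !mxpowzE /zadd /zunit.
    case: eqP => [->|_]; last by rewrite addr0 mulr1.
    by rewrite exprzDr // -(BT a).
  rewrite prod_shift; last first.
    move=> i; rewrite mxpowzE; apply: commrXz; rewrite -(BT a).
    apply/commr_sym/commrX; exact: Bcomm.
  by rewrite count_uniq_mem ?index_enum_uniq // mem_index_enum expr1.
exists (fun t => Phi t * (Q t)^-1), B; split; [|split; [|split]].
- exact: Bunit.
- move=> t le a; rewrite Floq // Qshift mulmxE invrM ?Qunit //; last first.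
    by rewrite -(BT a) unitrX.
  by rewrite mulrA mulrK // -(BT a) unitrX.
- by move=> a b; rewrite mulmxE; apply: Bcomm.
- by move=> t le; rewrite mulmxE -/(Q t) mulrVK.
Qed.
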